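(* Let $H\in(\tfrac12,1)$. For each integer $n>1$ there exists a unique $x_n\in(0,n-1)$ such that the function $g_n(x)=x^{\frac12-H}\phi_n^H(x)$ is strictly decreasing on $(0,x_n)$ and strictly increasing on $(x_n,n-1)$. Moreover $\lim_{n\to\infty}\frac{x_n}{n-1}=H-\frac12$.
   Context: $\phi_n^H(x)=(n-x)^{H-\frac12}-(n-1-x)^{H-\frac12}$ for $x\in(0,n-1)$; $g_n:(0,n-1)\to(0,\infty)$. *)

(* Defs.v *)
From Stdlib Require Import Reals.
From Coquelicot Require Import Coquelicot.
Open Scope R_scope.

Definition phi (H : R) (n : nat) (x : R) : R :=
  Rpower (INR n - x) (H - 1/2) - Rpower (INR n - 1 - x) (H - 1/2).

Definition g (H : R) (n : nat) (x : R) : R :=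
  Rpower x (1/2 - H) * phi H n x.

Definition strict_decr_on (f : R -> R) (a b : R) : Prop :=
  forall u v, a < u -> u < v -> v < b -> f v < f u.

Definition strict_incr_on (f : R -> R) (a b : R) : Prop :=
  forall u v, a < u -> u < v -> v < b -> f u < f v.

Definition turning_point (H : R) (n : nat) (x : R) : Prop :=
  0 < x /\ x < INR n - 1 /\
  strict_decr_on (g H n) 0 x /\ strict_incr_on (g H n) x (INR n - 1).

(* Main.v *)
Require Import Defs.
From Stdlib Require Import Reals Lra Lia ClassicalEpsilon Ranalysis5.
From Coquelicot Require Import Coquelicot.
Open Scope R_scope.

Lemma dpl_eq f x l l' : derivable_pt_lim f x l -> l = l' -> derivable_pt_lim f x l'.
Proof. intros; subst; auto. Qed.

Lemma exp_le_m x y : x <= y -> exp x <= exp y.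
Proof. intros H; destruct (Rle_lt_or_eq_dec _ _ H) as [h|h].
  left; apply exp_increasing; auto. subst; lra. Qed.

Lemma ln_le_m x y : 0 < x -> x <= y -> ln x <= ln y.
Proof. intros Hx H; destruct (Rle_lt_or_eq_dec _ _ H) as [h|h].
  left; apply ln_increasing; auto. subst; lra. Qed.

Lemma rp_pos y p : 0 < Rpower y p.
Proof. unfold Rpower; apply exp_pos. Qed.

Lemma rp_m1 y p : 0 < y -> Rpower y (p - 1) = Rpower y p / y.
Proof. intros Hy. unfold Rpower.
  replace ((p - 1) * ln y) with (p * ln y + - ln y) by ring.
  rewrite exp_plus, exp_Ropp, exp_ln; auto. Qed.

Lemma rp_decr p y z : p < 0 -> 0 < y < z -> Rpower z p < Rpower y p.
Proof. intros Hp Hyz. unfold Rpower. apply exp_increasing.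
  assert (ln y < ln z) by (apply ln_increasing; lra). nra. Qed.

Lemma rp_decr_le p y z : p <= 0 -> 0 < y <= z -> Rpower z p <= Rpower y p.
Proof. intros Hp Hyz. unfold Rpower. apply exp_le_m.
  assert (ln y <= ln z) by (apply ln_le_m; lra). nra. Qed.

Lemma rp_incr p y z : 0 < p -> 0 < y < z -> Rpower y p < Rpower z p.
Proof. intros Hp Hyz. unfold Rpower. apply exp_increasing.
  assert (ln y < ln z) by (apply ln_increasing; lra). nra. Qed.

Lemma rp_one p : Rpower 1 p = 1.
Proof. unfold Rpower; rewrite ln_1, Rmult_0_r; apply exp_0. Qed.

Lemma d_rpc c p x : x < c -> derivable_pt_lim (fun x => Rpower (c - x) p) x (- p * Rpower (c - x) (p - 1)).
Proof.
  intros Hx.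
  assert (H1 := derivable_pt_lim_power (c - x) p ltac:(lra)).
  assert (H2 : derivable_pt_lim (fun x => c - x) x (-1)).
  { apply dpl_eq with (0 - 1). apply derivable_pt_lim_minus. apply derivable_pt_lim_const. apply derivable_pt_lim_id. ring. }
  apply dpl_eq with ((p * Rpower (c - x) (p - 1)) * -1); [|ring].
  apply (derivable_pt_lim_comp (fun x => c - x) (fun y => Rpower y p)); auto.
Qed.

Definition hh (a N x : R) : R :=
  x * (Rpower (N - 1 - x) (a - 1) - Rpower (N - x) (a - 1)) - (Rpower (N - x) a - Rpower (N - 1 - x) a).
Definition GG (a N x : R) : R :=
  Rpower x (- a) * (Rpower (N - x) a - Rpower (N - 1 - x) a).
Definition hh' (a N x : R) : R :=
  (1 - a) * ((Rpower (N - 1 - x) (a - 1) - Rpower (N - x) (a - 1))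
    + x * (Rpower (N - 1 - x) (a - 1 - 1) - Rpower (N - x) (a - 1 - 1))).

Lemma d_hh a N x : x < N - 1 -> derivable_pt_lim (hh a N) x (hh' a N x).
Proof.
  intros Hx. unfold hh, hh'.
  assert (A1 := d_rpc (N - 1) (a - 1) x Hx).
  assert (B1 := d_rpc N (a - 1) x ltac:(lra)).
  assert (A0 := d_rpc (N - 1) a x Hx).
  assert (B0 := d_rpc N a x ltac:(lra)).
  eapply dpl_eq.
  apply (derivable_pt_lim_minus (fun x => x * (Rpower (N - 1 - x) (a - 1) - Rpower (N - x) (a - 1)))
     (fun x => Rpower (N - x) a - Rpower (N - 1 - x) a)).
  apply (derivable_pt_lim_mult (fun x => x) (fun x => Rpower (N - 1 - x) (a - 1) - Rpower (N - x) (a - 1))).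
  apply derivable_pt_lim_id.
  apply (derivable_pt_lim_minus (fun x => Rpower (N - 1 - x) (a - 1)) (fun x => Rpower (N - x) (a - 1))); eauto.
  apply (derivable_pt_lim_minus (fun x => Rpower (N - x) a) (fun x => Rpower (N - 1 - x) a)); eauto.
  simpl.
  ring.
Qed.

Lemma d_GG a N x : 0 < x -> x < N - 1 ->
  derivable_pt_lim (GG a N) x (Rpower x (- a) * a / x * hh a N x).
Proof.
  intros H0 Hx. unfold GG.
  assert (P := derivable_pt_lim_power x (- a) H0).
  assert (B0 := d_rpc N a x ltac:(lra)).
  assert (A0 := d_rpc (N - 1) a x Hx).
  eapply dpl_eq.
  apply (derivable_pt_lim_mult (fun x => Rpower x (- a)) (fun x => Rpower (N - x) a - Rpower (N - 1 - x) a)).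
  exact P.
  apply (derivable_pt_lim_minus (fun x => Rpower (N - x) a) (fun x => Rpower (N - 1 - x) a)); eauto.
  simpl. rewrite rp_m1 by lra. unfold hh. field. lra.
Qed.

Lemma hh'_pos a N x : 0 < a < 1 -> 0 <= x < N - 1 -> 0 < hh' a N x.
Proof.
  intros Ha Hx. unfold hh'.
  assert (Rpower (N - x) (a - 1) < Rpower (N - 1 - x) (a - 1)) by (apply rp_decr; lra).
  assert (Rpower (N - x) (a - 1 - 1) < Rpower (N - 1 - x) (a - 1 - 1)) by (apply rp_decr; lra).
  apply Rmult_lt_0_compat. lra. nra.
Qed.

Lemma hh_incr a N u v : 0 < a < 1 -> 0 <= u -> u < v -> v < N - 1 -> hh a N u < hh a N v.
Proof.
  intros Ha Hu Huv Hv.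
  destruct (MVT_cor2 (hh a N) (hh' a N) u v Huv) as [c [Hc1 Hc2]].
  { intros c Hc; apply d_hh; lra. }
  assert (0 < hh' a N c) by (apply hh'_pos; lra). nra.
Qed.

Lemma hh_cont a N x : x < N - 1 -> continuity_pt (hh a N) x.
Proof. intros Hx. apply derivable_continuous_pt. exists (hh' a N x). apply d_hh; auto. Qed.

Lemma hh0 a N : 0 < a -> 1 < N -> hh a N 0 < 0.
Proof. intros Ha HN. unfold hh.
  assert (Rpower (N - 1 - 0) a < Rpower (N - 0) a) by (apply rp_incr; lra). lra. Qed.

Lemma mvt_pow p s : 0 < s -> exists c, s < c < s + 1 /\ Rpower (s + 1) p - Rpower s p = p * Rpower c (p - 1).
Proof.
  intros Hs.
  destruct (MVT_cor2 (fun y => Rpower y p) (fun y => p * Rpower y (p - 1)) s (s + 1)) as [c [E Hc]].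
  lra. intros c Hc. apply derivable_pt_lim_power. lra.
  exists c. split. auto. rewrite E. ring.
Qed.

Lemma hh_repr a N x : 0 < a < 1 -> x < N - 1 ->
  exists c c', N - 1 - x < c < N - x /\ N - 1 - x < c' < N - x /\
   hh a N x = x * (1 - a) * Rpower c (a - 1 - 1) - a * Rpower c' (a - 1).
Proof.
  intros Ha Hx.
  destruct (mvt_pow (a - 1) (N - 1 - x)) as [c [Hc Ec]]. lra.
  destruct (mvt_pow a (N - 1 - x)) as [c' [Hc' Ec']]. lra.
  replace (N - 1 - x + 1) with (N - x) in * by ring.
  exists c, c'. split. lra. split. lra.
  unfold hh. 
  replace (Rpower (N - 1 - x) (a - 1) - Rpower (N - x) (a - 1)) with (- (a - 1) * Rpower c (a - 1 - 1)) by lra.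
  rewrite Ec'. ring.
Qed.

Lemma rp_m2 y p : 0 < y -> Rpower y (p - 1 - 1) = Rpower y p / (y * y).
Proof. intros Hy. rewrite rp_m1, rp_m1 by lra. field. lra. Qed.

Lemma hh_upper a N x : 0 < a < 1 -> 0 < x -> 0 < N - 1 - x ->
  x * (1 - a) * (N - 1 - x + 1) <= a * ((N - 1 - x) * (N - 1 - x)) -> hh a N x < 0.
Proof.
  intros Ha Hx Hs Hc. assert (Hxn : x < N - 1) by lra. set (s := N - 1 - x) in *.
  destruct (hh_repr a N x Ha Hxn) as [c [c' [Hc1 [Hc2 E]]]]. rewrite E.
  assert (R1 : Rpower c (a - 1 - 1) < Rpower s a / (s * s)).
  { rewrite <- rp_m2 by lra. apply rp_decr; unfold s in *; lra. }
  assert (R2 : Rpower (N - x) a / (N - x) < Rpower c' (a - 1)).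
  { rewrite <- rp_m1 by lra. apply rp_decr; unfold s in *; lra. }
  assert (R3 : Rpower s a < Rpower (N - x) a) by (apply rp_incr; unfold s in *; lra).
  assert (Q := rp_pos s a).
  assert (R4 : Rpower s a / (s + 1) < Rpower c' (a - 1)).
  { replace (s + 1) with (N - x) by (unfold s; ring). eapply Rle_lt_trans. 2: exact R2.
    unfold Rdiv. apply Rmult_le_compat_r. left; apply Rinv_0_lt_compat; lra. lra. }
  assert (x * (1 - a) * Rpower c (a - 1 - 1) - a * Rpower c' (a - 1) <
     x * (1 - a) * (Rpower s a / (s * s)) - a * (Rpower s a / (s + 1))).
  { assert (0 < x * (1 - a)) by nra. nra. }
  assert (x * (1 - a) * (Rpower s a / (s * s)) - a * (Rpower s a / (s + 1)) =
     Rpower s a * (x * (1 - a) * (s + 1) - a * (s * s)) * / (s * s * (s + 1))) by (field; lra).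
  assert (0 < / (s * s * (s + 1))) by (apply Rinv_0_lt_compat; nra).
  assert (Rpower s a * (x * (1 - a) * (s + 1) - a * (s * s)) <= 0) by nra.
  nra.
Qed.

Lemma hh_lower a N x : 0 < a < 1 -> 0 < x -> 0 < N - 1 - x ->
  a * ((N - 1 - x + 1) * (N - 1 - x + 1)) <= x * (1 - a) * (N - 1 - x) -> 0 < hh a N x.
Proof.
  intros Ha Hx Hs Hc. assert (Hxn : x < N - 1) by lra. set (s := N - 1 - x) in *.
  destruct (hh_repr a N x Ha Hxn) as [c [c' [Hc1 [Hc2 E]]]]. rewrite E.
  assert (R1 : Rpower (N - x) a / ((N - x) * (N - x)) < Rpower c (a - 1 - 1)).
  { rewrite <- rp_m2 by lra. apply rp_decr; unfold s in *; lra. }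
  assert (R2 : Rpower c' (a - 1) < Rpower s a / s).
  { rewrite <- rp_m1 by lra. apply rp_decr; unfold s in *; lra. }
  assert (R3 : Rpower s a < Rpower (N - x) a) by (apply rp_incr; unfold s in *; lra).
  assert (Q := rp_pos s a).
  assert (R4 : Rpower s a / ((s + 1) * (s + 1)) < Rpower c (a - 1 - 1)).
  { replace (s + 1) with (N - x) by (unfold s; ring). eapply Rle_lt_trans. 2: exact R1.
    unfold Rdiv. apply Rmult_le_compat_r. left; apply Rinv_0_lt_compat; nra. lra. }
  assert (x * (1 - a) * (Rpower s a / ((s + 1) * (s + 1))) - a * (Rpower s a / s) <
     x * (1 - a) * Rpower c (a - 1 - 1) - a * Rpower c' (a - 1)).
  { assert (0 < x * (1 - a)) by nra. nra. }
  assert (x * (1 - a) * (Rpower s a / ((s + 1) * (s + 1))) - a * (Rpower s a / s) =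
     Rpower s a * (x * (1 - a) * s - a * ((s + 1) * (s + 1))) * / (s * (s + 1) * (s + 1))) by (field; lra).
  assert (0 < / (s * (s + 1) * (s + 1))) by (apply Rinv_0_lt_compat; nra).
  assert (0 <= Rpower s a * (x * (1 - a) * s - a * ((s + 1) * (s + 1)))) by nra.
  nra.
Qed.

Lemma hh_pos_ex a N : 0 < a < 1 -> 2 <= N -> exists x, 0 < x < N - 1 /\ 0 < hh a N x.
Proof.
  intros Ha HN.
  set (K := 2 * N / (1 - a)).
  assert (HK : 2 * N <= K) by (unfold K; apply Rmult_le_reg_r with (1 - a); [lra|]; field_simplify; nra; lra).
  assert (HK' : K * (1 - a) = 2 * N) by (unfold K; field; lra).
  set (s := Rpower (/ K) (/ (1 - a))).
  assert (Hs0 : 0 < s) by apply rp_pos.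
  assert (HsK : Rpower s (a - 1) = K).
  { unfold s. rewrite Rpower_mult. replace (/ (1 - a) * (a - 1)) with (- (1)) by (field; lra).
    rewrite Rpower_Ropp, Rpower_1. apply Rinv_inv. apply Rinv_0_lt_compat; lra. }
  assert (Hs1 : s <= / K).
  { unfold s, Rpower. rewrite <- (exp_ln (/ K)) at 2 by (apply Rinv_0_lt_compat; lra).
    apply exp_le_m.
    assert (ln (/ K) <= 0).
    { rewrite <- ln_1. apply ln_le_m. apply Rinv_0_lt_compat; lra.
      rewrite <- Rinv_1. apply Rinv_le_contravar; lra. }
    assert (1 <= / (1 - a)).
    { rewrite <- Rinv_1. apply Rinv_le_contravar; lra. }
    nra. }
  assert (HiK : / K * K = 1) by (field; lra).
  assert (HsK2 : s * K <= 1) by nra.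
  exists (N - 1 - s). split. split; nra.
  unfold hh. replace (N - 1 - (N - 1 - s)) with s by ring.
  replace (N - (N - 1 - s)) with (s + 1) by ring.
  rewrite HsK.
  assert (B1 : Rpower (s + 1) (a - 1) <= Rpower 1 (a - 1)) by (apply rp_decr_le; lra).
  rewrite rp_one in B1.
  destruct (mvt_pow a s Hs0) as [c [Hc Ec]]. rewrite Ec.
  assert (Rpower c (a - 1) < Rpower s (a - 1)) by (apply rp_decr; lra).
  rewrite HsK in H.
  assert (1 - s - a >= (1 - a) / 2) by nra.
  nra.
Qed.

Lemma key_ex a N : 0 < a < 1 -> 2 <= N -> exists z, 0 < z < N - 1 /\ hh a N z = 0.
Proof.
  intros Ha HN. destruct (hh_pos_ex a N Ha HN) as [x1 [Hx1 Hp]].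
  destruct (IVT_interv (hh a N) 0 x1) as [z [Hz E]].
  intros y Hy; apply hh_cont; lra. lra. apply hh0; lra. auto.
  exists z. split; auto. split; [|lra].
  destruct (Rle_lt_or_eq_dec 0 z) as [h|h]; try lra. subst z. assert (hh a N 0 < 0) by (apply hh0; lra). lra.
Qed.

Lemma g_eq H n x : g H n x = GG (H - 1/2) (INR n) x.
Proof. unfold g, phi, GG. replace (1/2 - H) with (- (H - 1/2)) by ring. reflexivity. Qed.

Lemma tp_of_key a N z : 0 < a < 1 -> 0 < z < N - 1 -> hh a N z = 0 ->
  strict_decr_on (GG a N) 0 z /\ strict_incr_on (GG a N) z (N - 1).
Proof.
  intros Ha Hz E. split.
  - intros u v Hu Huv Hv.
    destruct (MVT_cor2 (GG a N) (fun x => Rpower x (- a) * a / x * hh a N x) u v Huv) as [c [Ec Hc]].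
    { intros c Hc. apply d_GG; lra. }
    assert (hh a N c < hh a N z) by (apply hh_incr; lra).
    assert (Hp0 : 0 < Rpower c (- a) * a / c).
    { unfold Rdiv. apply Rmult_lt_0_compat. apply Rmult_lt_0_compat. apply rp_pos. lra.
      apply Rinv_0_lt_compat; lra. }
    assert (Hq : hh a N c < 0) by lra. revert Ec Hp0 Hq. generalize (Rpower c (- a) * a / c) (hh a N c). intros p q Ec Hp0 Hq. assert (Hpq : p * q < 0 \/ 0 < p * q) by (first [left; nra | right; nra]). assert (0 < v - u) by lra. nra.
  - intros u v Hu Huv Hv.
    destruct (MVT_cor2 (GG a N) (fun x => Rpower x (- a) * a / x * hh a N x) u v Huv) as [c [Ec Hc]].
    { intros c Hc. apply d_GG; lra. }
    assert (hh a N z < hh a N c) by (apply hh_incr; lra).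
    assert (Hp0 : 0 < Rpower c (- a) * a / c).
    { unfold Rdiv. apply Rmult_lt_0_compat. apply Rmult_lt_0_compat. apply rp_pos. lra.
      apply Rinv_0_lt_compat; lra. }
    assert (Hq : 0 < hh a N c) by lra. revert Ec Hp0 Hq. generalize (Rpower c (- a) * a / c) (hh a N c). intros p q Ec Hp0 Hq. assert (Hpq : p * q < 0 \/ 0 < p * q) by (first [left; nra | right; nra]). assert (0 < v - u) by lra. nra.
Qed.

Lemma tp_unique H n z y : turning_point H n z -> turning_point H n y -> y = z.
Proof.
  intros [Hz1 [Hz2 [Dz Iz]]] [Hy1 [Hy2 [Dy Iy]]].
  destruct (Rtotal_order y z) as [h|[h|h]]; auto.
  - assert (A := Dz (y + (z - y) / 3) (y + 2 * (z - y) / 3) ltac:(lra) ltac:(lra) ltac:(lra)).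
    assert (B := Iy (y + (z - y) / 3) (y + 2 * (z - y) / 3) ltac:(lra) ltac:(lra) ltac:(lra)). lra.
  - assert (A := Dy (z + (y - z) / 3) (z + 2 * (y - z) / 3) ltac:(lra) ltac:(lra) ltac:(lra)).
    assert (B := Iz (z + (y - z) / 3) (z + 2 * (y - z) / 3) ltac:(lra) ltac:(lra) ltac:(lra)). lra.
Qed.

Theorem lemmaA1 (H : R) (hH : 1/2 < H < 1) :
  exists xs : nat -> R,
    (forall n : nat, (1 < n)%nat ->
       turning_point H n (xs n) /\
       (forall y : R, turning_point H n y -> y = xs n)) /\
    is_lim_seq (fun n : nat => xs n / (INR n - 1)) (H - 1/2).
Proof.
  set (a := H - 1/2).
  assert (Ha : 0 < a < 1) by (unfold a; lra).
  assert (Ex : forall n : nat, exists z, (1 < n)%nat -> 0 < z < INR n - 1 /\ hh a (INR n) z = 0).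
  { intros n. destruct (Nat.lt_ge_cases 1 n) as [h|h].
    - assert (2 <= INR n) by (replace 2 with (INR 2) by (simpl; ring); apply le_INR; lia).
      destruct (key_ex a (INR n) Ha H0) as [z Hz]. exists z; auto.
    - exists 0. intros; lia. }
  set (xs := fun n => proj1_sig (constructive_indefinite_description _ (Ex n))).
  assert (Hxs : forall n, (1 < n)%nat -> 0 < xs n < INR n - 1 /\ hh a (INR n) (xs n) = 0).
  { intros n; unfold xs; destruct (constructive_indefinite_description _ (Ex n)); auto. }
  assert (TP : forall n, (1 < n)%nat -> turning_point H n (xs n)).
  { intros n hn. destruct (Hxs n hn) as [Hz E].
    destruct (tp_of_key a (INR n) (xs n) Ha Hz E) as [D I].
    split; [lra|split;[lra|split]].
    - intros u v ? ? ?. rewrite !g_eq. apply D; auto.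
    - intros u v ? ? ?. rewrite !g_eq. apply I; auto. }
  exists xs. split.
  { intros n hn. split. auto. intros y Hy. apply (tp_unique H n); auto. }
  apply is_lim_seq_Reals. intros eps Heps.
  set (d := Rmin (eps / 2) (Rmin (a / 2) ((1 - a) / 2))).
  assert (Hd1 : d <= eps / 2) by apply Rmin_l.
  assert (Hd2 : d <= a / 2) by (eapply Rle_trans; [apply Rmin_r|apply Rmin_l]).
  assert (Hd3 : d <= (1 - a) / 2) by (eapply Rle_trans; [apply Rmin_r|apply Rmin_r]).
  assert (Hd0 : 0 < d).
  { unfold d. repeat apply Rmin_glb_lt; lra. }
  set (t1 := a - d). set (t2 := a + d).
  set (M := 2 + 1 / ((1 - t1) * d) + 3 / ((1 - t2) * d)).
  assert (P1 : 0 < 1 / ((1 - t1) * d)) by (unfold t1; apply Rdiv_lt_0_compat; nra).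
  assert (P2 : 0 < 3 / ((1 - t2) * d)) by (unfold t2; apply Rdiv_lt_0_compat; nra).
  destruct (INR_unbounded M) as [n0 Hn0].
  exists (Nat.max 2 n0). intros n Hn. unfold R_dist.
  assert (hn : (1 < n)%nat) by lia.
  assert (Hm : INR n0 <= INR n) by (apply le_INR; lia).
  set (m := INR n - 1).
  assert (HmM : M - 1 < m) by (unfold m; lra).
  destruct (Hxs n hn) as [Hz E]. fold m in Hz.
  assert (Q1 : 1 <= m * ((1 - t1) * d)).
  { assert (m >= 1 / ((1 - t1) * d)) by (unfold M in HmM; lra).
    assert (1 / ((1 - t1) * d) * ((1 - t1) * d) = 1) by (field; unfold t1; nra).
    assert (0 < (1 - t1) * d) by (unfold t1; nra). nra. }
  assert (Q2 : 3 <= m * ((1 - t2) * d)).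
  { assert (m >= 3 / ((1 - t2) * d)) by (unfold M in HmM; lra).
    assert (3 / ((1 - t2) * d) * ((1 - t2) * d) = 3) by (field; unfold t2; nra).
    assert (0 < (1 - t2) * d) by (unfold t2; nra). nra. }
  assert (Hm1 : 1 <= m) by (unfold M in HmM; lra).
  assert (L : hh a (INR n) (t1 * m) < 0).
  { apply hh_upper; auto. unfold t1; nra. unfold m, t1 in *; nra.
    replace (INR n - 1 - t1 * m) with ((1 - t1) * m) by (unfold m; ring).
    assert (a * ((1 - t1) * m * ((1 - t1) * m)) - t1 * m * (1 - a) * ((1 - t1) * m + 1)
       = m * (m * ((1 - t1) * d) - t1 * (1 - a))) by (unfold t1; ring).
    assert (t1 * (1 - a) <= 1) by (unfold t1; nra).
    nra. }
  assert (U : 0 < hh a (INR n) (t2 * m)).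
  { apply hh_lower; auto. unfold t2; nra. unfold m, t2 in *; nra.
    replace (INR n - 1 - t2 * m) with ((1 - t2) * m) by (unfold m; ring).
    assert (t2 * m * (1 - a) * ((1 - t2) * m) - a * (((1 - t2) * m + 1) * ((1 - t2) * m + 1))
       = m * (m * ((1 - t2) * d)) - 2 * a * (1 - t2) * m - a) by (unfold t2; ring).
    assert (2 * a * (1 - t2) <= 2) by (unfold t2; nra).
    nra. }
  assert (Z1 : t1 * m < xs n).
  { destruct (Rlt_or_le (t1 * m) (xs n)) as [h|h]; auto.
    destruct (Rle_lt_or_eq_dec _ _ h) as [h'|h'].
    - assert (hh a (INR n) (xs n) < hh a (INR n) (t1 * m)) by (apply hh_incr; unfold m, t1 in *; nra). lra.
    - rewrite h' in E. lra. }
  assert (Z2 : xs n < t2 * m).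
  { destruct (Rlt_or_le (xs n) (t2 * m)) as [h|h]; auto.
    destruct (Rle_lt_or_eq_dec _ _ h) as [h'|h'].
    - assert (hh a (INR n) (t2 * m) < hh a (INR n) (xs n)) by (apply hh_incr; unfold m, t2 in *; nra). lra.
    - rewrite <- h' in E. lra. }
  fold m.
  assert (t1 < xs n / m < t2).
  { split; [apply Rmult_lt_reg_r with m|apply Rmult_lt_reg_r with m]; try lra;
    unfold Rdiv; rewrite Rmult_assoc, Rinv_l, Rmult_1_r; lra. }
  apply Rabs_def1; unfold t1, t2 in *; lra.
Qed.
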